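(* (a) If $A\in\mathcal{L}$, then $\Omega\setminus A\in\mathcal{U}$. (b) $\mathcal{U}$ is a quadratic algebra of subsets of $\Omega$.
   Context: $\Omega$ is the set of infinite sequences $\alpha_0\alpha_1\alpha_2\cdots$ with $\alpha_k\in\{0,1\}$ and $\alpha_0=0$. For $A\subseteq\Omega$ and $n\ge0$, $A^{(n)}=\{\omega\in\Omega:\text{there is }\omega'\in A\text{ whose first }n+1\text{ entries agree with those of }\omega\}$. $A$ is a lower set if $A=\bigcap_n A^{(n)}$; $\mathcal{L}$ is the collection of lower sets. $A$ is an upper set if $A=\bigcup_n\big(\Omega\setminus(\Omega\setminus A)^{(n)}\big)$; $\mathcal{U}$ is the collection of upper sets. A collection $Q$ of subsets of a set $S$ is a quadratic algebra if $\emptyset,S\in Q$ and whenever $A,B,C\in Q$ are mutually disjoint with $A\cup B,A\cup C,B\cup C\in Q$, then $A\cup B\cup C\in Q$. *)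

(* Defs.v *)
From Stdlib Require Import Arith.

(* Omega: infinite 0/1 sequences (bool, false = 0) with first entry 0. *)
Definition Omega : Type := { a : nat -> bool | a 0 = false }.

Definition seqOf (w : Omega) : nat -> bool := proj1_sig w.

Definition OSet := Omega -> Prop.

Definition agree (n : nat) (w w' : Omega) : Prop :=
  forall k, k <= n -> seqOf w k = seqOf w' k.

Definition approx (A : OSet) (n : nat) : OSet :=
  fun w => exists w', A w' /\ agree n w w'.

Definition complO (A : OSet) : OSet := fun w => ~ A w.

Definition is_lower (A : OSet) : Prop :=
  forall w, A w <-> (forall n, approx A n w).

Definition is_upper (A : OSet) : Prop :=
  forall w, A w <-> (exists n, ~ approx (complO A) n w).

Definition quadratic_algebra (S : Type) (Q : (S -> Prop) -> Prop) : Prop :=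
  Q (fun _ => False) /\ Q (fun _ => True) /\
  forall A B C : S -> Prop,
    Q A -> Q B -> Q C ->
    (forall x, ~ (A x /\ B x)) ->
    (forall x, ~ (A x /\ C x)) ->
    (forall x, ~ (B x /\ C x)) ->
    Q (fun x => A x \/ B x) ->
    Q (fun x => A x \/ C x) ->
    Q (fun x => B x \/ C x) ->
    Q (fun x => A x \/ B x \/ C x).

(* Main.v *)
Require Import Defs.
From Stdlib Require Import Classical.

Lemma agree_refl n w : agree n w w.
Proof. intros k _; reflexivity. Qed.

Lemma upper_of (U : OSet) :
  (forall w, U w -> exists n, ~ approx (complO U) n w) -> is_upper U.
Proof.
  intros H w; split; [apply H|].
  intros [n Hn]. apply NNPP; intro HU. apply Hn. exists w. split; [exact HU|apply agree_refl].
Qed.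

Lemma upper_union (U V : OSet) : is_upper U -> is_upper V ->
  is_upper (fun x => U x \/ V x).
Proof.
  intros HU HV. apply upper_of. intros w [h|h].
  - apply HU in h. destruct h as [n Hn]. exists n. intros [w' [h1 h2]].
    apply Hn. exists w'. split; [intro; apply h1; left; assumption|assumption].
  - apply HV in h. destruct h as [n Hn]. exists n. intros [w' [h1 h2]].
    apply Hn. exists w'. split; [intro; apply h1; right; assumption|assumption].
Qed.

Theorem theorem4p4 :
  (forall A : OSet, is_lower A -> is_upper (complO A)) /\
  quadratic_algebra Omega is_upper.
Proof.
  split.
  - intros A HA. apply upper_of. intros w Hw.
    destruct (not_all_ex_not _ _ (fun h => Hw (proj2 (HA w) h))) as [n Hn].
    exists n. intros [w' [h1 h2]]. apply Hn. exists w'. split; [|exact h2].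
    apply NNPP; exact h1.
  - split; [|split].
    + apply upper_of. intros w [].
    + apply upper_of. intros w _. exists 0. intros [w' [h _]]. apply h; exact I.
    + intros A B C _ _ HC _ _ _ HAB _ _.
      apply upper_of. intros w h.
      assert (h' : (A w \/ B w) \/ C w) by tauto.
      apply (upper_union _ _ HAB HC w) in h'. destruct h' as [n Hn].
      exists n. intros [w' [h1 h2]]. apply Hn. exists w'. split; [|exact h2].
      intro; apply h1; tauto.
Qed.
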